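(* Let $n\ge1$, $G\le S_n$ and $\chi$ a character of $G$. Then $d_\chi^G(AB)=d_\chi^G(A)\,d_\chi^G(B)$ for all $A,B\in\mathbb S_n(\mathbb C)$ if and only if $d_\chi^G=\det$ on $M_n(\mathbb C)$.
   Context: A character of $G\le S_n$ is a function $g\mapsto\operatorname{tr}(\rho(g))$ for some homomorphism $\rho:G\to GL_m(\mathbb C)$, $m\ge1$. $\mathbb S_n(\mathbb C)$ is the set of complex symmetric $n\times n$ matrices. $d_\chi^G(A)=\sum_{\sigma\in G}\chi(\sigma)\prod_{i=1}^n A_{i\,\sigma(i)}$ for $A\in M_n(\mathbb C)$. *)

(* Defs.v *)
From HB Require Import structures.
From mathcomp Require Import all_boot all_order all_algebra all_fingroup all_character.
Set Implicit Arguments. Unset Strict Implicit. Unset Printing Implicit Defensive.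
Import GRing.Theory Num.Theory.
Local Open Scope ring_scope.

Definition is_character (C : numClosedFieldType) (n : nat)
    (G : {group 'S_n}) (chi : 'S_n -> C) : Prop :=
  exists m : nat, (0 < m)%N /\
    exists rho : 'S_n -> 'M[C]_m,
      mx_repr G rho /\ {in G, forall g, chi g = \tr (rho g)}.

Definition dchiG (C : numClosedFieldType) (n : nat) (G : {group 'S_n})
    (chi : 'S_n -> C) (A : 'M[C]_n) : C :=
  \sum_(s in G) chi s * \prod_(i < n) A i (s i).

(* Main.v *)
Require Import Defs.
From HB Require Import structures.
From mathcomp Require Import all_boot all_order all_algebra all_fingroup all_character.
Import GRing.Theory Num.Theory.
Local Open Scope ring_scope.

Lemma prod_id (C : numClosedFieldType) (n : nat) (s : 'S_n) :
  \prod_k (1%:M : 'M[C]_n) k (s k) = (s == 1%g)%:R.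
Proof.
case: (eqVneq s 1%g) => [->|ns].
  by rewrite big1 // => k _; rewrite perm1 mxE eqxx.
case: (pickP (fun k => s k != k)) => [k hk|hall].
  by rewrite (bigD1 k) //= mxE eq_sym (negbTE hk) mul0r.
exfalso; move/eqP: ns; apply; apply/permP => k; rewrite perm1.
by apply/eqP/negbNE; rewrite hall.
Qed.

Definition blk (C : numClosedFieldType) (n : nat) (i j : 'I_n) (a b c d : C)
  : 'M[C]_n :=
  \matrix_(r, l) if r == i then (if l == i then a else if l == j then b else 0)
    else if r == j then (if l == i then c else if l == j then d else 0)
    else (r == l)%:R.
Arguments blk {C n}.

Lemma tperm_neq1 (n : nat) (i j : 'I_n) : i != j -> tperm i j != 1%g :> 'S_n.
Proof.
move=> hij; apply/eqP => h; have := tpermL i j; rewrite h perm1 => /eqP.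
by rewrite (negbTE hij).
Qed.
Arguments tperm_neq1 {n i j}.

Lemma prod_blk (C : numClosedFieldType) (n : nat) (i j : 'I_n) (a b c d : C)
  (hij : i != j) (s : 'S_n) :
  \prod_k blk i j a b c d k (s k) =
  if s == 1%g then a * d else if s == tperm i j then b * c else 0.
Proof.
have hji : j != i by rewrite eq_sym.
case: (pickP (fun k => (k != i) && (k != j) && (s k != k)))
  => [k /andP[/andP[ki kj] sk] | hfix].
  have ns1 : s != 1%g by apply: contraNneq sk => ->; rewrite perm1.
  have nst : s != tperm i j.
    by apply: contraNneq sk => ->; rewrite tpermD // eq_sym.
  rewrite (negbTE ns1) (negbTE nst) (bigD1 k) //= mxE (negbTE ki) (negbTE kj).
  by rewrite eq_sym (negbTE sk) mul0r.
have fix1 : forall k, k != i -> k != j -> s k = k.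
  move=> k ki kj; apply/eqP/negbNE; apply/negP => sk.
  by have := hfix k; rewrite ki kj sk.
have -> : \prod_k blk i j a b c d k (s k) =
    blk i j a b c d i (s i) * blk i j a b c d j (s j).
  rewrite (bigD1 i) //= (bigD1 j) /=; last by rewrite hji.
  rewrite mulrA big1 ?mulr1 // => k /andP[kj ki].
  by rewrite mxE (negbTE ki) (negbTE kj) fix1 // eqxx.
have inij : forall k, (k == i) || (k == j) -> (s k == i) || (s k == j).
  move=> k hk; apply/negPn/negP; rewrite negb_or => /andP[ski skj].
  have h := perm_inj (fix1 _ ski skj).
  by move: ski skj hk; rewrite h => /negbTE -> /negbTE ->.
have sij : s i != s j by rewrite (inj_eq perm_inj).
case/orP: (inij i (introT orP (or_introl (eqxx i)))) => /eqP si.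
  have sj : s j = j.
    case/orP: (inij j (introT orP (or_intror (eqxx j)))) => /eqP // sj; by move: sij; rewrite si sj eqxx.
  have -> : s = 1%g.
    apply/permP => k; rewrite perm1.
    have [->|ki] := eqVneq k i => //; have [->|kj] := eqVneq k j => //.
    exact: fix1.
  by rewrite eqxx !mxE !perm1 !eqxx (negbTE hji).
have sj : s j = i.
  case/orP: (inij j (introT orP (or_intror (eqxx j)))) => /eqP // sj; by move: sij; rewrite si sj eqxx.
have -> : s = tperm i j.
  apply/permP => k.
  have [->|ki] := eqVneq k i; first by rewrite tpermL.
  have [->|kj] := eqVneq k j; first by rewrite tpermR.
  by rewrite tpermD 1?eq_sym // fix1.
rewrite (negbTE (tperm_neq1 hij)) eqxx !mxE tpermL tpermR.
by rewrite eqxx (negbTE hji) !eqxx.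
Qed.
Arguments prod_blk {C n i j a b c d}.

Lemma dchi_blk (C : numClosedFieldType) (n : nat) (G : {group 'S_n})
  (chi : 'S_n -> C) (i j : 'I_n) (a b c d : C) (hij : i != j) :
  dchiG G chi (blk i j a b c d) =
  chi 1%g * (a * d) + (if tperm i j \in G then chi (tperm i j) * (b * c) else 0).
Proof.
rewrite /dchiG (bigD1 1%g) ?group1 //= (prod_blk hij) eqxx; congr (_ + _).
case: (boolP (tperm i j \in G)) => hT.
  rewrite (bigD1 (tperm i j)) /=; last by rewrite hT tperm_neq1.
  rewrite (prod_blk hij) (negbTE (tperm_neq1 hij)) eqxx big1 ?addr0 //.
  by move=> s /andP[/andP[_ s1] st]; rewrite (prod_blk hij) (negbTE s1) (negbTE st) mulr0.
rewrite big1 // => s /andP[sG s1]; rewrite (prod_blk hij) (negbTE s1).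
have st : s != tperm i j by apply: contraNneq hT => <-.
by rewrite (negbTE st) mulr0.
Qed.

Lemma dchi_id (C : numClosedFieldType) (n : nat) (G : {group 'S_n})
  (chi : 'S_n -> C) : dchiG G chi 1%:M = chi 1%g.
Proof.
rewrite /dchiG (bigD1 1%g) ?group1 //= prod_id eqxx mulr1 big1 ?addr0 //.
by move=> s /andP[_ s1]; rewrite prod_id (negbTE s1) mulr0.
Qed.

Lemma blk_sym (C : numClosedFieldType) (n : nat) (i j : 'I_n) (a b d : C)
  (hij : i != j) : (blk i j a b b d)^T = blk i j a b b d.
Proof.
have hji : j != i by rewrite eq_sym.
apply/matrixP => r l; rewrite !mxE.
case ri: (r == i); case li: (l == i); case rj: (r == j); case lj: (l == j) => //=;
  rewrite ?(eqP ri) ?(eqP li) ?(eqP rj) ?(eqP lj) ?eqxx ?(negbTE hij) ?(negbTE hji) //;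
  try by rewrite eq_sym.
all: by rewrite ?li ?ri ?lj ?rj.
Qed.

Lemma JK_row (C : numClosedFieldType) (n : nat) (i j : 'I_n) (hij : i != j) l :
  (blk i j (1 : C) 1 1 1 *m blk i j 1 (-1) (-1) 1) i l = 0.
Proof.
have hji : j != i by rewrite eq_sym.
rewrite mxE (bigD1 i) //= (bigD1 j) /=; last by rewrite hji.
rewrite big1 ?addr0; last first.
  by move=> k /andP[kj ki]; rewrite !mxE eqxx (negbTE ki) (negbTE kj) mul0r.
rewrite !mxE !eqxx (negbTE hji) !mul1r.
by case: (l == i); case: (l == j); rewrite ?addrN ?addNr ?addr0.
Qed.

Theorem mainTheorem15 (C : numClosedFieldType) (n : nat) (G : {group 'S_n})
    (chi : 'S_n -> C) (hn : (0 < n)%N) (hchi : is_character G chi) :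
  (forall A B : 'M[C]_n, A^T = A -> B^T = B ->
     dchiG G chi (A *m B) = dchiG G chi A * dchiG G chi B)
  <-> (forall A : 'M[C]_n, dchiG G chi A = \det A).
Proof.
split; last first.
  by move=> hd A B _ _; rewrite !hd det_mulmx.
move=> H.
have [m [m0 [rho [[r1 rM] htr]]]] := hchi.
have chi1m : chi 1%g = m%:R by rewrite htr ?group1 // r1 mxtrace1.
have chi1 : chi 1%g = 1.
  have h := H 1%:M 1%:M (trmx1 _ _) (trmx1 _ _).
  rewrite mulmx1 dchi_id in h.
  have nz : chi 1%g != 0 by rewrite chi1m pnatr_eq0 -lt0n.
  by apply: (mulfI nz); rewrite mulr1 -h.
have m1 : m = 1%N by apply/eqP; rewrite -(pnatr_eq1 C) -chi1m chi1.
subst m.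
have chiM : {in G &, forall x y, chi (x * y)%g = chi x * chi y}.
  move=> x y xG yG; rewrite !htr ?groupM // rM //.
  by rewrite /mxtrace !big_ord1 mxE big_ord1.
have step3 : forall i j : 'I_n, i != j -> tperm i j \in G /\ chi (tperm i j) = -1.
  move=> i j hij.
  have h := H _ _ (@blk_sym C n i j 1 1 1 hij) (@blk_sym C n i j 1 (-1) 1 hij).
  have e : dchiG G chi (blk i j 1 1 1 1 *m blk i j 1 (-1) (-1) 1) = 0.
    rewrite /dchiG big1 // => s _.
    by rewrite (bigD1 i) //= JK_row // mul0r mulr0.
  move: h; rewrite e !dchi_blk // chi1 !mulr1 mulrNN mulr1.
  case: (tperm i j \in G); last by rewrite addr0 mulr1 => /eqP; rewrite eq_sym oner_eq0.
  move/eqP; rewrite eq_sym mulr1 mulf_eq0 orbb addr_eq0 => /eqP ->; split => //.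
  by rewrite opprK.
have step4 : forall s : 'S_n, s \in G /\ chi s = (-1) ^+ s.
  move=> s; case: (prod_tpermP s) => ts -> {s}.
  elim: ts => [|t ts IH] /=.
    by rewrite big_nil group1 odd_perm1 chi1.
  case/andP => dt dts; rewrite big_cons.
  have [hG hc] := IH dts; have [tG tc] := step3 _ _ dt.
  split; first by rewrite groupM.
  by rewrite chiM // hc tc odd_permM odd_tperm dt signr_addb expr1.
move=> A; rewrite /dchiG /determinant.
rewrite (eq_bigl (fun _ => true)); last by move=> s; rewrite (step4 s).1.
by apply: eq_bigr => s _; rewrite (step4 s).2.
Qed.
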